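(* Let $\theta\in[0,\pi/2]$, $\nu_1,\nu_2\in[0,1]$ with $\nu_1+\nu_2=1$, and $\rho_s=\nu_1|\psi_1\rangle\langle\psi_1|+\nu_2|\psi_2\rangle\langle\psi_2|$ with $|\psi_1\rangle=\cos\theta|00\rangle+\sin\theta|11\rangle$, $|\psi_2\rangle=\sin\theta|00\rangle-\cos\theta|11\rangle$, and let $\mathcal C=|(\nu_1-\nu_2)\sin2\theta|$ (its concurrence). Then there exist unit vectors $\hat a_1,\hat a_2,\hat a_3\in\mathbb R^3$ and an orthonormal triple $\hat b_1,\hat b_2,\hat b_3\in\mathbb R^3$ such that $\frac13\sum_{k=1}^3\mathrm{Tr}\big[\rho_s\,(\hat a_k\cdot\vec\sigma)\otimes(\hat b_k\cdot\vec\sigma)\big]=\frac{2+\sqrt{1+2\mathcal C^2}}{3\sqrt3},$ which is strictly larger than $\frac1{\sqrt3}$ whenever $\mathcal C>0$.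
   Context: $\vec\sigma=(\sigma_x,\sigma_y,\sigma_z)$ is the vector of Pauli matrices; the first tensor factor is Alice's qubit, the second Bob's; $\{|0\rangle,|1\rangle\}$ is the computational basis. The number $1/\sqrt3$ is the local-hidden-state bound of the 3-setting linear steering inequality. *)

(* Defs.v *)
From HB Require Import structures.
From mathcomp Require Import all_boot all_order all_algebra.
From mathcomp Require Import all_classical all_reals all_analysis.
From mathcomp Require Import complex mxtens.
Set Implicit Arguments. Unset Strict Implicit. Unset Printing Implicit Defensive.
Import Order.TTheory GRing.Theory Num.Theory.
Local Open Scope ring_scope.

Section Pauli.
Variable R : rcfType.
Local Notation C := R[i].

Definition sigma_x : 'M[C]_2 :=
  \matrix_(i < 2, j < 2) (if (i : nat) != j then 1 else 0).
Definition sigma_y : 'M[C]_2 :=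
  \matrix_(i < 2, j < 2)
    (if ((i : nat) == 0%N) && ((j : nat) == 1%N) then - Complex 0 1
     else if ((i : nat) == 1%N) && ((j : nat) == 0%N) then Complex 0 1
     else 0).
Definition sigma_z : 'M[C]_2 :=
  \matrix_(i < 2, j < 2)
    (if (i : nat) == j then (if (i : nat) == 0%N then 1 else -1) else 0).

Definition pauli (k : 'I_3) : 'M[C]_2 :=
  if (k : nat) == 0%N then sigma_x
  else if (k : nat) == 1%N then sigma_y else sigma_z.

Definition dot_sigma (a : 'cV[R]_3) : 'M[C]_2 :=
  \sum_(k < 3) (real_complex R (a k 0)) *: pauli k.

Definition ket0 : 'cV[C]_2 := \col_(i < 2) (if (i : nat) == 0%N then 1 else 0).
Definition ket1 : 'cV[C]_2 := \col_(i < 2) (if (i : nat) == 1%N then 1 else 0).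

(* two-qubit kets; first tensor factor = Alice *)
Definition ket00 : 'cV[C]_(2 * 2) := tensmx ket0 ket0.
Definition ket11 : 'cV[C]_(2 * 2) := tensmx ket1 ket1.

Definition proj {n : nat} (psi : 'cV[C]_n) : 'M[C]_n :=
  psi *m (map_mx (fun z => z^*) psi)^T.

Definition dot3 (u v : 'cV[R]_3) : R := \sum_(k < 3) u k 0 * v k 0.

End Pauli.

Definition psi1 {R : realType} (theta : R) : 'cV[R[i]]_(2 * 2) :=
  real_complex R (cos theta) *: ket00 R + real_complex R (sin theta) *: ket11 R.
Definition psi2 {R : realType} (theta : R) : 'cV[R[i]]_(2 * 2) :=
  real_complex R (sin theta) *: ket00 R - real_complex R (cos theta) *: ket11 R.
Definition rho_s {R : realType} (nu1 nu2 theta : R) : 'M[R[i]]_(2 * 2) :=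
  real_complex R nu1 *: proj (psi1 theta) + real_complex R nu2 *: proj (psi2 theta).

Definition concurrence {R : realType} (nu1 nu2 theta : R) : R :=
  `|(nu1 - nu2) * sin (2 * theta)|.

Definition steering_value {R : realType} (rho : 'M[R[i]]_(2 * 2))
  (a b : 'I_3 -> 'cV[R]_3) : R[i] :=
  (3%:R)^-1 * \sum_(k < 3) \tr (rho *m tensmx (dot_sigma (a k)) (dot_sigma (b k))).

(* Main.v *)
Require Import Defs.
From HB Require Import structures.
From mathcomp Require Import all_boot all_order all_algebra.
From mathcomp Require Import all_classical all_reals all_analysis.
From mathcomp Require Import complex mxtens.
From mathcomp Require Import ring lra.
Import Order.TTheory GRing.Theory Num.Theory.
Local Open Scope ring_scope.

Section S.
Variable R : realType.
Local Notation rc := (real_complex R).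
Local Notation j := (Complex (0:R) 1).

Lemma dsE (a : 'cV[R]_3) (p q : 'I_2) : dot_sigma a p q =
  if (p : nat) == 0%N then (if (q : nat) == 0%N then rc (a 2%:R 0) else rc (a 0 0) - j * rc (a 1 0))
  else (if (q : nat) == 0%N then rc (a 0 0) + j * rc (a 1 0) else - rc (a 2%:R 0)).
Proof.
have h : forall (k l : 'I_3), val k = val l -> a k 0 = a l 0 by move=> k l /val_inj ->.
rewrite /dot_sigma summxE !big_ord_recr big_ord0 /= !mxE /pauli /=.
rewrite (h (widen_ord _ (widen_ord _ ord_max)) 0 erefl) (h (widen_ord _ ord_max) 1 erefl)
  (h ord_max 2%:R erefl).
case: p => [[|[|//]] ?]; case: q => [[|[|//]] ?] /=; ring.
Qed.
Definition v1 (th : R) (k : nat) : R[i] :=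
  if k == 0%N then rc (cos th) else if k == 3%N then rc (sin th) else 0.
Definition v2 (th : R) (k : nat) : R[i] :=
  if k == 0%N then rc (sin th) else if k == 3%N then - rc (cos th) else 0.

Lemma psi1E th (k : 'I_(2*2)) : psi1 th k 0 = v1 th k.
Proof.
rewrite /psi1 /ket00 /ket11 !mxE /v1.
case: k => [[|[|[|[|//]]]] ?] /=; rewrite ?mxE /=; ring.
Qed.
Lemma psi2E th (k : 'I_(2*2)) : psi2 th k 0 = v2 th k.
Proof.
rewrite /psi2 /ket00 /ket11 !mxE /v2.
case: k => [[|[|[|[|//]]]] ?] /=; rewrite ?mxE /=; ring.
Qed.
Lemma conjCc (z : R[i]) : (z^*)%R = (z^*)%C.
Proof. by []. Qed.
Lemma cn (x : R) : ((- rc x)^*)%C = - rc x.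
Proof. rewrite rmorphN; congr (- _); exact: conjc_real. Qed.

Lemma rhoE nu1 nu2 th (p q : 'I_(2*2)) : rho_s nu1 nu2 th p q =
  rc nu1 * v1 th p * v1 th q + rc nu2 * v2 th p * v2 th q.
Proof.
rewrite /rho_s /proj !mxE !big_ord1 !mxE /v1 /v2.
case: p => [[|[|[|[|//]]]] ?]; case: q => [[|[|[|[|//]]]] ?] /=;
 rewrite ?(mulr1, mulr0, mul1r, mul0r, addr0, add0r, subr0, sub0r) ?conjCc ?conjc_real ?cn ?conjc0; ring.
Qed.
Lemma jj : j * j = -1 :> R[i].
Proof. by rewrite -expr2 sqr_i. Qed.

Lemma trE (nu1 nu2 th : R) (a b : 'cV[R]_3) :
  \tr (rho_s nu1 nu2 th *m tensmx (dot_sigma a) (dot_sigma b)) =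
  rc ((nu1 * cos th ^+ 2 + nu2 * sin th ^+ 2 + nu1 * sin th ^+ 2 + nu2 * cos th ^+ 2)
        * a 2%:R 0 * b 2%:R 0
      + (nu1 - nu2) * cos th * sin th * (2 * a 0 0 * b 0 0 - 2 * a 1 0 * b 1 0)).
Proof.
rewrite /mxtrace.
under eq_bigr => p _ do rewrite mxE.
under eq_bigr => p _ do under eq_bigr => q _ do rewrite rhoE mxE !dsE.
rewrite !big_ord_recr !big_ord0 /= /v1 /v2 /=.
set c := cos th; set s := sin th.
transitivity ((rc nu1 * rc c * rc c + rc nu2 * rc s * rc s + rc nu1 * rc s * rc s + rc nu2 * rc c * rc c)
   * rc (a 2%:R 0) * rc (b 2%:R 0) + (rc nu1 * rc c * rc s - rc nu2 * rc s * rc c) *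
   (2 * rc (a 0 0) * rc (b 0 0) + 2 * (j * j) * rc (a 1 0) * rc (b 1 0))).
  ring.
rewrite jj. ring.
Qed.
Definition mk (x y z : R) : 'cV[R]_3 :=
  \col_(k < 3) (if (k : nat) == 0%N then x else if (k : nat) == 1%N then y else z).

Lemma mk0 x y z : mk x y z 0 0 = x. Proof. by rewrite mxE. Qed.
Lemma mk1 x y z : mk x y z 1 0 = y. Proof. by rewrite mxE. Qed.
Lemma mk2 x y z : mk x y z 2%:R 0 = z. Proof. by rewrite mxE. Qed.

Lemma dotmk x y z x' y' z' : dot3 (mk x y z) (mk x' y' z') = x * x' + y * y' + z * z'.
Proof. by rewrite /dot3 !big_ord_recr big_ord0 /= !mxE /= add0r. Qed.

Lemma fin1 (x1 x2 x3 y : R) : x1 + x2 + x3 = 3 * y ->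
  3%:R^-1 * (0 + rc x1 + rc x2 + rc x3) = rc y.
Proof.
move=> h; rewrite add0r -!rmorphD h rmorphM rmorph_nat.
rewrite mulrA mulVf ?mul1r // pnatr_eq0 //.
Qed.

Lemma fin2 (N K D w v u q : R) : N = 1 -> K = D / 2 -> w * w = 1 / 2 -> v * q = 1 ->
  q * q = 1 + 2 * D ^+ 2 ->
  (N * v * u + K * (2 * (2 * D * w * v) * (2 * w * u) - 2 * 0 * 0)) +
  (N * 1 * u + K * (2 * 0 * - (w * u) - 2 * 0 * w)) +
  (N * 1 * u + K * (2 * 0 * - (w * u) - 2 * 0 * - w)) = 3 * ((2 + q) * u / 3).
Proof.
move=> -> -> hw hv hq.
transitivity (v * u * (1 + 4 * D ^+ 2 * (w * w)) + 2 * u); first by field.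
rewrite hw; transitivity (v * u * (q * q) + 2 * u); first by rewrite hq; field.
transitivity ((v * q) * q * u + 2 * u); first ring.
by rewrite hv; field.
Qed.
End S.

Theorem mainTheorem9 (R : realType) (theta nu1 nu2 : R) :
  0 <= theta -> theta <= pi / 2 ->
  0 <= nu1 <= 1 -> 0 <= nu2 <= 1 -> nu1 + nu2 = 1 ->
  exists (a b : 'I_3 -> 'cV[R]_3),
    (forall k, dot3 (a k) (a k) = 1) /\
    (forall k l, dot3 (b k) (b l) = (if k == l then 1 else 0)) /\
    steering_value (rho_s nu1 nu2 theta) a b
      = real_complex R
          ((2 + Num.sqrt (1 + 2 * concurrence nu1 nu2 theta ^+ 2))
           / (3 * Num.sqrt 3)) /\
    (0 < concurrence nu1 nu2 theta ->
       1 / Num.sqrt 3 <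
       (2 + Num.sqrt (1 + 2 * concurrence nu1 nu2 theta ^+ 2)) / (3 * Num.sqrt 3)).
Proof.
move=> _ _ _ _ hnu.
set D := (nu1 - nu2) * sin (2 * theta).
have hC : concurrence nu1 nu2 theta ^+ 2 = D ^+ 2.
  by rewrite /concurrence -normrX ger0_norm ?sqr_ge0.
rewrite hC.
pose q : R := Num.sqrt (1 + 2 * D ^+ 2).
have hq2 : q * q = 1 + 2 * D ^+ 2.
  by rewrite -expr2 sqr_sqrtr // addr_ge0 // mulr_ge0 // sqr_ge0.
have hq1 : 1 <= q.
  by rewrite -sqrtr1 ler_sqrt; have:=sqr_ge0 D; lra.
have s3p : 0 < Num.sqrt 3 :> R by rewrite sqrtr_gt0.
have s2p : 0 < Num.sqrt 2 :> R by rewrite sqrtr_gt0.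
have s33 : Num.sqrt 3 * Num.sqrt 3 = 3 :> R by rewrite -expr2 sqr_sqrtr.
have s22 : Num.sqrt 2 * Num.sqrt 2 = 2 :> R by rewrite -expr2 sqr_sqrtr.
pose u : R := 1 / Num.sqrt 3.
pose w : R := 1 / Num.sqrt 2.
pose v : R := 1 / q.
have huu : u * u = 1 / 3.
  by rewrite /u mulf_div mulr1 s33.
have hww : w * w = 1 / 2 by rewrite /w mulf_div mulr1 s22.
have hvq : v * q = 1 by rewrite /v mul1r mulVf //; apply/eqP => h; move: hq1; rewrite h; lra.
have hu3 : u * Num.sqrt 3 = 1 by rewrite /u mul1r mulVf // gt_eqF.
have up : 0 < u by rewrite /u divr_gt0.
have hT : (2 + q) / (3 * Num.sqrt 3) = (2 + q) * u / 3.
  by rewrite /u -!mulrA; congr (_ * _); rewrite mul1r invfM mulrC.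
rewrite -/q hT.
exists (fun k : 'I_3 => if (k : nat) == 0%N then @mk R (2 * D * w * v) 0 v else @mk R 0 0 1).
exists (fun k : 'I_3 => if (k : nat) == 0%N then @mk R (2 * w * u) 0 u
   else if (k : nat) == 1%N then @mk R (- (w * u)) w u else @mk R (- (w * u)) (- w) u).
split; [|split; [|split]].
- case=> [[|[|[|//]]] ?] /=; rewrite dotmk; try lra.
  transitivity (v * v * (4 * D ^+ 2 * (w * w) + 1)); first ring.
  rewrite hww; transitivity (v * v * (q * q)); first by rewrite hq2; field.
  transitivity ((v * q) * (v * q)); first ring.
  by rewrite hvq mulr1.
- case=> [[|[|[|//]]] ?]; case=> [[|[|[|//]]] ?] /=; rewrite dotmk; nra.
- rewrite /steering_value !big_ord_recr big_ord0 /= !trE !mk0 !mk1 !mk2.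
  have e1 : nu1 * cos theta ^+ 2 + nu2 * sin theta ^+ 2 + nu1 * sin theta ^+ 2 +
     nu2 * cos theta ^+ 2 = 1.
    transitivity ((nu1 + nu2) * (cos theta ^+ 2 + sin theta ^+ 2)); first ring.
    by rewrite cos2Dsin2 hnu mulr1.
  have e2 : (nu1 - nu2) * cos theta * sin theta = D / 2.
    by rewrite /D mulr_natl mulr2n sinD; field.
  refine (@fin1 R _ _ _ _ _); apply: (@fin2 R) => //; exact: e2.
- move=> hc. have hD : 0 < D ^+ 2 by rewrite -hC exprn_gt0.
  have : 1 < q by nra.
  rewrite div1r -/u. nra.
Qed.
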